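(* Let $\sigma : X^+ \to S$ be a semigroup choice of generators for a semigroup $S$ and $u, v \in X^+$; then $u\sigma = v\sigma$ if and only if $u\overline{v} \in L_\sigma(S)$. Similarly, if $\sigma : X^* \to M$ is a monoid choice of generators for a monoid $M$ and $u, v \in X^*$, then $u\sigma = v\sigma$ if and only if $u\overline{v} \in L_\sigma(M)$.
   Context: Maps are written on the right. $X^*$, $X^+$: free monoid and free semigroup on $X$. Let $\overline{X} = \{\overline{x} : x \in X\}$ be new symbols, $\hat{X} = X \cup \overline{X}$, with $\overline{x_1\cdots x_n} = \overline{x_n}\cdots\overline{x_1}$ for $x_i \in X$. For a monoid $M$ and surjective monoid morphism $\sigma : X^* \to M$, the loop automaton has vertex set $M$, for each $a \in M$, $x \in X$ an edge $a \to a(x\sigma)$ labelled $x$ and an edge $a(x\sigma) \to a$ labelled $\overline{x}$; the loop problem $L_\sigma(M)$ is the set of labels of paths from the identity to the identity. For a semigroup $S$ and surjective morphism $\sigma : X^+ \to S$, $L_\sigma(S)$ is the loop problem of $S^1$ ($S$ with a new identity adjoined, even if one exists) with respect to the unique extension $\sigma^1 : X^* \to S^1$. *)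

(* Defs.v *)
(* words are lists. Maps written on the right: a(x sigma) = mul a (sigma x). *)
From Stdlib Require Import List.
Import ListNotations.

Set Implicit Arguments.

(* Letters of hat X = X ∪ bar X: inl x is x, inr x is bar x. *)
Definition hat (X : Type) := (X + X)%type.

Definition emb {X : Type} (u : list X) : list (hat X) := map (@inl X X) u.

Definition wbar {X : Type} (u : list X) : list (hat X) := rev (map (@inr X X) u).

(* Paths in the loop automaton of (M, mul, one) with generators gen x = x sigma:
   edge a -> mul a (gen x) labelled x, edge mul a (gen x) -> a labelled bar x. *)
Inductive lpath {X M : Type} (mul : M -> M -> M) (gen : X -> M) :
    M -> list (hat X) -> M -> Prop :=
| lpath_nil : forall a, lpath mul gen a [] a
| lpath_fwd : forall a x w b,
    lpath mul gen (mul a (gen x)) w b -> lpath mul gen a (inl x :: w) b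
| lpath_bwd : forall a x w b,
    lpath mul gen a w b -> lpath mul gen (mul a (gen x)) (inr x :: w) b.

Definition loop_problem {X M : Type} (mul : M -> M -> M) (one : M) (gen : X -> M)
  (w : list (hat X)) : Prop := lpath mul gen one w one.

(* S^1: S with a new identity None adjoined. *)
Definition mul1 {S : Type} (mul : S -> S -> S) (a b : option S) : option S :=
  match a, b with
  | None, _ => b
  | _, None => a
  | Some x, Some y => Some (mul x y)
  end.

Definition is_monoid_choice {X M : Type} (mul : M -> M -> M) (one : M)
  (sigma : list X -> M) : Prop :=
  sigma [] = one /\
  (forall u v, sigma (u ++ v) = mul (sigma u) (sigma v)) /\
  (forall m, exists u, sigma u = m).

(* Semigroup choice of generators: surjective semigroup morphism X^+ -> S,
   X^+ = nonempty lists (value of sigma on [] is irrelevant). *)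
Definition is_semigroup_choice {X S : Type} (mul : S -> S -> S)
  (sigma : list X -> S) : Prop :=
  (forall u v, u <> [] -> v <> [] -> sigma (u ++ v) = mul (sigma u) (sigma v)) /\
  (forall s, exists u, u <> [] /\ sigma u = s).

(* L_sigma(S) := loop problem of S^1 w.r.t. sigma^1, sigma^1(x) = Some (x sigma). *)
Definition sg_loop_problem {X S : Type} (mul : S -> S -> S) (sigma : list X -> S)
  (w : list (hat X)) : Prop :=
  loop_problem (mul1 mul) None (fun x => Some (sigma [x])) w.

Definition mon_loop_problem {X M : Type} (mul : M -> M -> M) (one : M)
  (sigma : list X -> M) (w : list (hat X)) : Prop :=
  loop_problem mul one (fun x => sigma [x]) w.

(* Main.v *)
Require Import Defs.
From Stdlib Require Import List.
Import ListNotations.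

Section Gen.
Variables (X M : Type) (mul : M -> M -> M) (gen : X -> M).

Definition F (u : list X) (a : M) := fold_left (fun a x => mul a (gen x)) u a.

Lemma F_cons x u a : F (x :: u) a = F u (mul a (gen x)).
Proof. reflexivity. Qed.
Lemma F_nil a : F [] a = a.
Proof. reflexivity. Qed.

Lemma lp_app a l1 l2 c :
  lpath mul gen a (l1 ++ l2) c <-> exists b, lpath mul gen a l1 b /\ lpath mul gen b l2 c.
Proof.
  revert a; induction l1 as [|h l1 IH]; intros a; simpl; split.
  - intros H; exists a; split; [constructor|exact H].
  - intros [b [Hb Hc]]; inversion Hb; subst; exact Hc.
  - intros H; inversion H; subst.
    + apply IH in H4; destruct H4 as [b [? ?]]; exists b; split; [constructor; auto|auto].
    + apply IH in H4; destruct H4 as [b [? ?]]; exists b; split; [constructor; auto|auto].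
  - intros [b [Hb Hc]]; inversion Hb; subst.
    + constructor; apply IH; eauto.
    + constructor; apply IH; eauto.
Qed.

Lemma lp_fwd u a b : lpath mul gen a (map inl u) b <-> b = F u a.
Proof.
  revert a; induction u as [|x u IH]; intros a; simpl; split.
  - intros H; inversion H; auto.
  - intros ->; constructor.
  - intros H; inversion H; subst; apply IH; auto.
  - intros H; constructor; apply IH; auto.
Qed.

Lemma lp_bwd v a b : lpath mul gen a (rev (map inr v)) b <-> lpath mul gen b (map inl v) a.
Proof.
  revert a b; induction v as [|x v IH]; intros a b; simpl.
  - split; intros H; inversion H; subst; constructor.
  - rewrite lp_app. split.
    + intros [c [Hc Hb]]. apply IH in Hc.
      inversion Hb as [|? ? ? ? Hz|? ? ? ? Hz]; subst. inversion Hz; subst. constructor; auto.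
    + intros H; inversion H; subst. exists (mul b (gen x)); split.
      * apply IH; auto.
      * constructor; constructor.
Qed.

Lemma loop_iff one u v :
  loop_problem mul one gen (emb u ++ wbar v) <-> F u one = F v one.
Proof.
  unfold loop_problem, emb, wbar. rewrite lp_app. split.
  - intros [b [H1 H2]]. apply lp_fwd in H1. apply lp_bwd, lp_fwd in H2. congruence.
  - intros H. exists (F u one); split.
    + apply lp_fwd; auto.
    + apply lp_bwd, lp_fwd; auto.
Qed.
End Gen.

Theorem corollary4p2 :
  (forall (X S : Type) (mul : S -> S -> S) (sigma : list X -> S),
      (forall a b c, mul a (mul b c) = mul (mul a b) c) ->
      is_semigroup_choice mul sigma ->
      forall u v : list X, u <> [] -> v <> [] ->
        (sigma u = sigma v <-> sg_loop_problem mul sigma (emb u ++ wbar v)))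
  /\
  (forall (X M : Type) (mul : M -> M -> M) (one : M) (sigma : list X -> M),
      (forall a b c, mul a (mul b c) = mul (mul a b) c) ->
      (forall a, mul one a = a) -> (forall a, mul a one = a) ->
      is_monoid_choice mul one sigma ->
      forall u v : list X,
        (sigma u = sigma v <-> mon_loop_problem mul one sigma (emb u ++ wbar v))).
Proof.
  split.
  - intros X S mul sigma assoc [hom _] u v hu hv.
    assert (HS : forall w s, w <> [] ->
      @F X (option S) (mul1 mul) (fun x => Some (sigma [x])) w (Some s) = Some (mul s (sigma w))).
    { induction w as [|x w IH]; intros s Hw; [congruence|].
      rewrite F_cons.
      destruct w as [|y w'].
      - reflexivity.
      - simpl mul1. rewrite IH by discriminate. rewrite <- assoc.
        change (x :: y :: w') with ([x] ++ y :: w'). rewrite hom by discriminate. reflexivity. }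
    assert (HN : forall w, w <> [] ->
      @F X (option S) (mul1 mul) (fun x => Some (sigma [x])) w None = Some (sigma w)).
    { intros [|x w] Hw; [congruence|]. rewrite F_cons.
      destruct w as [|y w']; [reflexivity|].
      simpl mul1. rewrite HS by discriminate.
      change (x :: y :: w') with ([x] ++ y :: w'). rewrite hom by discriminate. reflexivity. }
    unfold sg_loop_problem. rewrite loop_iff, HN, HN by auto.
    split; [intros ->; auto | intros H; inversion H; auto].
  - intros X M mul one sigma assoc l1 r1 [h0 [hom _]] u v.
    assert (HF : forall w a, @F X M mul (fun x => sigma [x]) w a = mul a (sigma w)).
    { induction w as [|x w IH]; intros a; [rewrite F_nil|rewrite F_cons].
      - rewrite h0, r1; auto.
      - rewrite IH, <- assoc, <- hom. reflexivity. }
    unfold mon_loop_problem. rewrite loop_iff, !HF, !l1. tauto.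
Qed.
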